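(* Let $d\in\mathbb{N}$, $c=10d+2400$, and let $K$ be a positive real number. Define $b:\mathbb{N}\to(0,\infty)$ by \[ b(s)=\begin{cases}c\sqrt{s}\,\big(sK^{-\frac{1}{d+1}}\big)^{-1} & \text{if } s\ge K^{\frac{1}{d+1}},\\ c\sqrt{s}\,\big(sK^{-\frac{1}{d+1}}\big)^{-0.1} & \text{if } s<K^{\frac{1}{d+1}}.\end{cases} \] Let $g:(0,\infty)\to(0,\infty)$ be given by $g(\lambda)=10e^{-\lambda^2/4}$ if $\lambda\ge2$ and $g(\lambda)=10\log(1+2\lambda^{-1})$ if $0<\lambda<2$. Then \[ \sum_{i=0}^{\infty}\frac{K}{2^{i(d+1)}}\,g\Big(\frac{b(2^i)}{2^{i/2}}\Big)\le1. \]
   Context: $\log$ denotes the natural logarithm. *)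

(* Defs.v *)
From Stdlib Require Import Reals.
From Coquelicot Require Import Coquelicot.
Open Scope R_scope.

Definition cst (d : nat) : R := 10 * INR d + 2400.

Definition bfun (d : nat) (K : R) (s : nat) : R :=
  let t := Rpower K (1 / INR (d + 1)) in
  let x := INR s * Rpower K (- (1 / INR (d + 1))) in
  if Rle_dec t (INR s)
  then cst d * sqrt (INR s) * Rpower x (-1)
  else cst d * sqrt (INR s) * Rpower x (-(1/10)).

Definition gfun (l : R) : R :=
  if Rle_dec 2 l then 10 * exp (- (l ^ 2) / 4)
  else 10 * ln (1 + 2 / l).

Definition term (d : nat) (K : R) (i : nat) : R :=
  K / 2 ^ (i * (d + 1)) * gfun (bfun d K (2 ^ i) / Rpower 2 (INR i / 2)).

(* Main.v *)
Require Import Defs.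
From Stdlib Require Import Reals Lra Lia.
From Coquelicot Require Import Coquelicot.
Open Scope R_scope.

Lemma ln1p_le (a : R) : 0 <= a -> ln (1 + a) <= a.
Proof.
  intro Ha. rewrite <- (ln_exp a) at 2. apply ln_le. lra. apply exp_ineq1_le.
Qed.

Lemma exp_pow' (a : R) (n : nat) : exp a ^ n = exp (INR n * a).
Proof.
  induction n. simpl. rewrite Rmult_0_l, exp_0. reflexivity.
  rewrite S_INR. simpl. rewrite IHn, <- exp_plus. f_equal. ring.
Qed.

Lemma pow_le_self (a : R) (n : nat) : 0 <= a <= 1 -> (1 <= n)%nat -> a ^ n <= a.
Proof.
  intros Ha Hn. destruct n. lia. simpl.
  assert (a ^ n <= 1). { clear Hn. induction n. simpl; lra. simpl. assert (0 <= a ^ n) by (apply pow_le; lra). nra. }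
  assert (0 <= a ^ n) by (apply pow_le; lra). nra.
Qed.

Lemma sq_exp_bound (z : R) : z * exp (- z) <= 1.
Proof.
  rewrite exp_Ropp. pose proof (exp_ineq1_le z). pose proof (exp_pos z).
  apply (Rmult_le_reg_r (exp z)); auto.
  rewrite Rmult_assoc, Rinv_l by lra. lra.
Qed.

Definition mf (r : R) : R := if Rle_dec 1 r then / r else 3 * sqrt r.

Lemma key (n : nat) (c x : R) : (1 <= n)%nat -> 2400 <= c -> 20 * (INR n + 1) <= c^2 -> 0 < x ->
  0 <= (/x)^n * gfun (if Rle_dec 1 x then c / x else c * Rpower x (-(1/10)))
  /\ (/x)^n * gfun (if Rle_dec 1 x then c / x else c * Rpower x (-(1/10)))
     <= 20 / c * mf (c / (2*x)).
Proof.
  intros Hn Hc Hc2 Hx.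
  assert (Hxn : 0 < (/x)^n) by (apply pow_lt; apply Rinv_0_lt_compat; lra).
  destruct (Rle_dec 1 x) as [H1|H1].
  - set (l := c / x).
    assert (Hl : 0 < l) by (unfold l; apply Rdiv_lt_0_compat; lra).
    assert (Hix : /x = l / c) by (unfold l; field; lra).
    assert (Hpow : (/x)^n <= l / c).
    { rewrite <- Hix. apply pow_le_self; auto. split. left; apply Rinv_0_lt_compat; lra.
      rewrite <- Rinv_1. apply Rinv_le_contravar; lra. }
    assert (Hr : c / (2 * x) = l / 2) by (unfold l; field; lra).
    rewrite Hr. unfold gfun, mf.
    destruct (Rle_dec 2 l) as [H2|H2].
    + destruct (Rle_dec 1 (l/2)) as [_|H3]; [|lra].
      pose proof (exp_pos (- (l^2)/4)).
      pose proof (sq_exp_bound (l^2/4)).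
      replace (- (l^2/4)) with (- (l^2)/4) in H0 by field.
      split. apply Rmult_le_pos; lra.
      apply Rle_trans with (l / c * (10 * exp (- l ^ 2 / 4))).
      apply Rmult_le_compat_r; lra.
      replace (20 / c * / (l / 2)) with (l / c * (40 / l^2)) by (field; lra).
      apply Rmult_le_compat_l. apply Rdiv_le_0_compat; lra.
      apply (Rmult_le_reg_r (l^2/4)). nra.
      replace (40 / l ^ 2 * (l ^ 2 / 4)) with 10 by (field; lra). nra.
    + destruct (Rle_dec 1 (l/2)) as [H3|_]; [lra|].
      set (w := sqrt (l/2)).
      assert (Hw : 0 < w) by (apply sqrt_lt_R0; lra).
      assert (Hw2 : w * w = l / 2) by (apply sqrt_sqrt; lra).
      assert (Hlog : ln (1 + 2 / l) <= 2 / w).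
      { replace (2 / l) with (/ (w*w)) by (rewrite Hw2; field; lra).
        apply Rle_trans with (ln ((1 + / w) ^ 2)).
        apply ln_le. assert (0 < /(w*w)) by (apply Rinv_0_lt_compat; nra). lra.
        replace ((1 + / w)^2) with (1 + / (w*w) + 2 / w) by (field; lra).
        assert (0 < /w) by (apply Rinv_0_lt_compat; lra).
        assert (0 < /(w*w)) by (apply Rinv_0_lt_compat; nra). lra.
        rewrite ln_pow. replace (INR 2) with 2 by (simpl; ring).
        assert (ln (1 + / w) <= / w) by (apply ln1p_le; left; apply Rinv_0_lt_compat; lra).
        unfold Rdiv. lra.
        assert (0 < /w) by (apply Rinv_0_lt_compat; lra). lra. }
      assert (Hlpos : 0 < ln (1 + 2 / l)).
      { rewrite <- ln_1. apply ln_increasing. lra. assert (0 < 2 / l) by (apply Rdiv_lt_0_compat; lra). lra. }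
      split. apply Rmult_le_pos; lra.
      apply Rle_trans with (l / c * (10 * ln (1 + 2 / l))).
      apply Rmult_le_compat_r; lra.
      fold w. replace l with (2 * (w * w)) by lra.
      apply Rle_trans with (2 * (w*w) / c * (10 * (2 / w))).
      apply Rmult_le_compat_l. apply Rdiv_le_0_compat; nra.
      replace (2 * (w*w)) with l by lra. lra.
      replace (2 * (w * w) / c * (10 * (2 / w))) with (40 * w / c) by (field; lra).
      unfold Rdiv. rewrite !Rmult_assoc. 
      apply Rle_trans with (60 * (w * /c)). 
      assert (0 < w * / c) by (apply Rmult_lt_0_compat; [lra| apply Rinv_0_lt_compat; lra]). lra.
      right. field. lra.
  - assert (Hlx : ln x < 0). { rewrite <- ln_1. apply ln_increasing; lra. }
    set (L := - ln x).
    assert (HL : 0 < L) by (unfold L; lra).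
    assert (Hxe : x = exp (- L)) by (unfold L; rewrite Ropp_involutive, exp_ln; lra).
    assert (Hrp : Rpower x (-(1/10)) = exp (L / 10)) by (unfold Rpower, L; f_equal; field).
    rewrite Hrp.
    assert (He1 : 1 + L/10 <= exp (L/10)) by apply exp_ineq1_le.
    assert (He2 : 1 + L/5 <= exp (L/5)) by apply exp_ineq1_le.
    assert (Hsq : (c * exp (L/10))^2 = c^2 * exp (L/5)).
    { simpl. rewrite !Rmult_1_r. replace (c * exp (L / 10) * (c * exp (L / 10))) with (c*c*(exp (L/10) * exp (L/10))) by ring.
      rewrite <- exp_plus. f_equal. f_equal. field. }
    unfold gfun, mf.
    destruct (Rle_dec 2 (c * exp (L / 10))) as [_|H2]; [| nra].
    destruct (Rle_dec 1 (c / (2 * x))) as [_|H3].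
    2:{ exfalso. apply H3. apply (Rmult_le_reg_r (2*x)). lra. unfold Rdiv. rewrite Rmult_assoc, Rinv_l by lra. lra. }
    rewrite Hsq.
    assert (Hinvx : / x = exp L) by (rewrite Hxe, <- exp_Ropp, Ropp_involutive; reflexivity).
    rewrite Hinvx, exp_pow'.
    pose proof (exp_pos (- (c ^ 2 * exp (L / 5)) / 4)).
    pose proof (exp_pos (INR n * L)).
    split. apply Rmult_le_pos. lra. lra.
    replace (20 / c * / (c / (2 * x))) with (40 * x / c^2) by (field; lra).
    rewrite Rmult_comm, Rmult_assoc, <- exp_plus.
    assert (Hb : - (c ^ 2 * exp (L / 5)) / 4 + INR n * L <= - L - c^2/4).
    { assert (INR n * L + L <= c^2 * L / 20).
      { apply (Rmult_le_reg_r (/L)). apply Rinv_0_lt_compat; lra.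
        replace ((INR n * L + L) * / L) with (INR n + 1) by (field; lra).
        replace (c^2 * L / 20 * / L) with (c^2/20) by (field; lra). lra. }
      assert (c^2 * (1 + L/5) <= c^2 * exp (L/5)) by (apply Rmult_le_compat_l; nra).
      lra. }
    apply Rle_trans with (10 * exp (- L - c^2/4)).
    apply Rmult_le_compat_l. lra. destruct Hb as [Hb|Hb]. left; apply exp_increasing; auto. rewrite Hb; lra.
    rewrite Hxe. unfold Rminus. rewrite exp_plus.
    pose proof (sq_exp_bound (c^2/4)) as H4. pose proof (exp_pos (-L)).
    apply (Rmult_le_reg_r (c^2 / (4 * exp (-L)))).
    apply Rdiv_lt_0_compat; nra.
    replace (40 * exp (- L) / c ^ 2 * (c ^ 2 / (4 * exp (- L)))) with 10 by (field; nra).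
    replace (10 * (exp (- L) * exp (- (c ^ 2 / 4))) * (c ^ 2 / (4 * exp (- L)))) with (10 * (c^2/4 * exp (- (c ^ 2 / 4)))) by (field; nra).
    lra.
Qed.

Definition Gf (r : R) : R := if Rle_dec 1 r then 2 / r else 13 - 8 * sqrt r.

Lemma sqrt2_gt : 1.375 < sqrt 2.
Proof.
  pose proof (sqrt_sqrt 2 ltac:(lra)). pose proof (sqrt_pos 2). nra.
Qed.

Lemma G_base r : 0 < r -> mf r <= Gf r.
Proof.
  intro Hr. unfold mf, Gf. destruct (Rle_dec 1 r).
  unfold Rdiv. assert (0 < / r) by (apply Rinv_0_lt_compat; lra). lra.
  assert (sqrt r < 1). { rewrite <- sqrt_1. apply sqrt_lt_1; lra. }
  pose proof (sqrt_pos r). lra.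
Qed.

Lemma G_le r : 0 < r -> Gf r <= 13.
Proof.
  intro Hr. unfold Gf. destruct (Rle_dec 1 r).
  apply (Rmult_le_reg_r r). lra. unfold Rdiv. rewrite Rmult_assoc, Rinv_l by lra. lra.
  pose proof (sqrt_pos r). lra.
Qed.

Lemma G_step r : 0 < r -> Gf r + mf (r/2) <= Gf (r/2).
Proof.
  intro Hr. unfold mf, Gf.
  assert (Hs : sqrt (r/2) = sqrt r / sqrt 2) by (apply sqrt_div; lra).
  pose proof sqrt2_gt. pose proof (sqrt_pos r).
  destruct (Rle_dec 1 (r/2)); destruct (Rle_dec 1 r); try lra.
  - right. field. lra.
  - assert (sqrt (r/2) < 1). { rewrite <- sqrt_1. apply sqrt_lt_1; lra. }
    pose proof (sqrt_pos (r/2)).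
    assert (2 / r <= 2). { apply (Rmult_le_reg_r r). lra. unfold Rdiv. rewrite Rmult_assoc, Rinv_l by lra. lra. }
    lra.
  - rewrite Hs. 
    assert (sqrt r / sqrt 2 * 11 <= 8 * sqrt r).
    { apply (Rmult_le_reg_r (sqrt 2)). lra. unfold Rdiv. 
      replace (sqrt r * / sqrt 2 * 11 * sqrt 2) with (11 * sqrt r) by (field; lra). nra. }
    lra.
Qed.


Lemma term_eq d K i : 0 < K ->
  term d K i = (/ (2^i / Rpower K (1 / INR (d+1))))^(d+1) *
    gfun (if Rle_dec 1 (2^i / Rpower K (1 / INR (d+1)))
          then cst d / (2^i / Rpower K (1 / INR (d+1)))
          else cst d * Rpower (2^i / Rpower K (1 / INR (d+1))) (-(1/10))).
Proof.
  intro hK. unfold term, bfun.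
  set (t := Rpower K (1 / INR (d+1))).
  assert (Ht : 0 < t) by (unfold t, Rpower; apply exp_pos).
  assert (HD : 0 < INR (d+1)) by (apply lt_0_INR; lia).
  assert (Hp : 0 < 2 ^ i) by (apply pow_lt; lra).
  rewrite pow_INR. replace (INR 2) with 2 by (simpl; ring).
  rewrite Rpower_Ropp. fold t.
  assert (Hsq : Rpower 2 (INR i / 2) = sqrt (2^i)).
  { rewrite <- Rpower_sqrt by auto. rewrite <- Rpower_pow by lra. rewrite Rpower_mult. reflexivity. }
  rewrite Hsq.
  assert (Hsp : 0 < sqrt (2^i)) by (apply sqrt_lt_R0; auto).
  assert (HK : K / 2 ^ (i * (d + 1)) = (/ (2 ^ i / t)) ^ (d + 1)).
  { rewrite pow_mult. rewrite pow_inv. replace (/ (2^i / t)) with (t / 2^i) by (field; lra).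
    unfold Rdiv. rewrite Rpow_mult_distr, pow_inv. f_equal.
    rewrite <- (Rpower_pow (d+1) t Ht). unfold t. rewrite Rpower_mult.
    replace (1 / INR (d + 1) * INR (d + 1)) with 1 by (field; lra). rewrite Rpower_1; auto. rewrite Rinv_mult, Rinv_inv. ring. }
  rewrite HK. f_equal. f_equal.
  assert (Hx : 0 < 2^i / t) by (apply Rdiv_lt_0_compat; lra).
  replace (2 ^ i * / t) with (2^i / t) by reflexivity.
  destruct (Rle_dec t (2^i)) as [H1|H1]; destruct (Rle_dec 1 (2^i/t)) as [H2|H2].
  - replace (-1) with (- (1)) by ring. rewrite Rpower_Ropp, Rpower_1 by auto. field. split; lra.
  - exfalso. apply H2. apply (Rmult_le_reg_r t). lra. unfold Rdiv. rewrite Rmult_assoc, Rinv_l by lra. lra.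
  - exfalso. apply H1. apply (Rmult_le_reg_r (/t)). apply Rinv_0_lt_compat; lra. rewrite Rinv_r by lra. exact H2.
  - field. lra.
Qed.

Theorem lemma3p2 (d : nat) (K : R) (hK : 0 < K) :
  exists l : R, is_series (term d K) l /\ l <= 1.
Proof.
  set (c := cst d).
  assert (Hd : 0 <= INR d) by apply pos_INR.
  assert (Hc : 2400 <= c) by (unfold c, cst; lra).
  assert (HD : INR (d+1) = INR d + 1) by (rewrite plus_INR; simpl; ring).
  assert (Hc2 : 20 * (INR (d+1) + 1) <= c^2) by (rewrite HD; unfold c, cst; nra).
  set (t := Rpower K (1 / INR (d+1))).
  assert (Ht : 0 < t) by (unfold t, Rpower; apply exp_pos).
  set (r0 := c * t / 2).
  assert (Hr0 : 0 < r0) by (unfold r0; nra).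
  assert (Hb : forall i, 0 <= term d K i /\ term d K i <= 20 / c * mf (r0 / 2^i)).
  { intro i. rewrite term_eq by auto. fold t.
    assert (Hp : 0 < 2 ^ i) by (apply pow_lt; lra).
    replace (r0 / 2^i) with (c / (2 * (2^i / t))) by (unfold r0; field; lra).
    apply key; auto. lia. apply Rdiv_lt_0_compat; lra. }
  assert (Hps : forall n, sum_n (term d K) n <= 20 / c * Gf (r0 / 2^n)).
  { induction n.
    - rewrite sum_O. simpl. replace (r0 / 1) with r0 by field.
      destruct (Hb 0%nat) as [_ H]. simpl in H. replace (r0 / 1) with r0 in H by field.
      eapply Rle_trans. exact H. apply Rmult_le_compat_l.
      apply Rdiv_le_0_compat; lra. apply G_base; auto.
    - rewrite sum_Sn. change (plus ?a ?b) with (a + b).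
      destruct (Hb (S n)) as [_ H].
      assert (Hp : 0 < 2 ^ n) by (apply pow_lt; lra).
      replace (r0 / 2 ^ S n) with ((r0 / 2^n) / 2) in * by (simpl; field; lra).
      pose proof (G_step (r0 / 2^n) ltac:(apply Rdiv_lt_0_compat; lra)).
      assert (0 < 20 / c) by (apply Rdiv_lt_0_compat; lra).
      nra. }
  assert (Hbd : forall n, sum_n (term d K) n <= 260 / c).
  { intro n. eapply Rle_trans. apply Hps.
    assert (Hp : 0 < 2 ^ n) by (apply pow_lt; lra).
    pose proof (G_le (r0 / 2^n) ltac:(apply Rdiv_lt_0_compat; lra)).
    assert (0 < 20 / c) by (apply Rdiv_lt_0_compat; lra).
    replace (260 / c) with (20 / c * 13) by (field; lra). nra. }
  assert (Hinc : forall n, sum_n (term d K) n <= sum_n (term d K) (S n)).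
  { intro n. rewrite sum_Sn. change (plus ?a ?b) with (a + b).
    destruct (Hb (S n)). lra. }
  assert (Hpos : forall n, 0 <= sum_n (term d K) n).
  { induction n. rewrite sum_O. apply Hb. eapply Rle_trans. exact IHn. apply Hinc. }
  pose proof (ex_lim_seq_incr _ Hinc) as Hex.
  pose proof (Lim_seq_correct _ Hex) as Hlim.
  assert (Hup : Rbar_le (Lim_seq (sum_n (term d K))) (260 / c)).
  { eapply is_lim_seq_le. exact Hbd. exact Hlim. apply is_lim_seq_const. }
  assert (Hlo : Rbar_le 0 (Lim_seq (sum_n (term d K)))).
  { eapply is_lim_seq_le. exact Hpos. apply is_lim_seq_const. exact Hlim. }
  destruct (Lim_seq (sum_n (term d K))) as [l| |] eqn:El; simpl in Hup, Hlo; try contradiction.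
  exists l. split.
  - exact Hlim.
  - eapply Rle_trans. exact Hup.
    apply (Rmult_le_reg_r c). lra. unfold Rdiv. rewrite Rmult_assoc, Rinv_l by lra. lra.
Qed.
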